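(* Let $\Omega\subseteq\mathbb{R}^n$ be open and let $f\in\mathbb{A}(\Omega)$ be D-continuous. If there is a dense subset $D$ of $\Omega$ such that $w(f(x))=0$ for all $x\in D$, then $f$ is H-continuous.
   Context: $\overline{\mathbb{R}}=\mathbb{R}\cup\{\pm\infty\}$, $\mathbb{I}\overline{\mathbb{R}}$ is the set of closed intervals $[\underline a,\overline a]$ with $\underline a\le\overline a$ in $\overline{\mathbb{R}}$, $a\in\overline{\mathbb{R}}$ identified with $[a,a]$. The width $w(a)$ of $a=[\underline a,\overline a]$ is $\overline a-\underline a$ if both endpoints are finite, $\infty$ if $\underline a<\overline a$ and one endpoint is infinite, and $0$ if $\underline a=\overline a=\pm\infty$. $\mathbb{A}(\Omega)$ is the set of functions $\Omega\to\mathbb{I}\overline{\mathbb{R}}$. $B_\delta(x)=\{y\in\Omega:\|x-y\|<\delta\}$. For dense $D\subseteq\Omega$ and $f\in\mathbb{A}(D)$: $I(D,\Omega,f)(x)=\sup_{\delta>0}\inf\{z\in f(y):y\in B_\delta(x)\cap D\}$, $S(D,\Omega,f)(x)=\inf_{\delta>0}\sup\{z\in f(y):y\in B_\delta(x)\cap D\}$, $F(D,\Omega,f)(x)=[I(D,\Omega,f)(x),S(D,\Omega,f)(x)]$; $F(f)=F(\Omega,\Omega,f)$. $f$ is D-continuous if $F(D,\Omega,f)=f$ for every dense $D\subseteq\Omega$ (using the restriction of $f$ to $D$); H-continuous if for every $g\in\mathbb{A}(\Omega)$ with $g(x)\subseteq f(x)$ for all $x$ one has $F(g)=f$. *)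

(* Defs.v *)
From HB Require Import structures.
From mathcomp Require Import all_boot all_order all_algebra.
From mathcomp Require Import all_classical all_reals all_analysis.
Set Implicit Arguments. Unset Strict Implicit. Unset Printing Implicit Defensive.
Import Order.TTheory GRing.Theory Num.Theory.
Import numFieldNormedType.Exports.
Local Open Scope classical_set_scope.
Local Open Scope ring_scope.

Section IntervalAnalysis.
Variables (R : realType) (n : nat).

(* An element of I(\bar R) is a pair (lower, upper); validity lower <= upper
   is imposed pointwise on Omega by [in_A]. *)
Definition ivl := (\bar R * \bar R)%type.

Definition mem_ivl (z : \bar R) (a : ivl) : Prop := (a.1 <= z)%E /\ (z <= a.2)%E.

Definition width (a : ivl) : \bar R :=
  match a with
  | (EFin l, EFin h) => (h - l)%:E
  | (l, h) => if l == h then 0%E else +oo%E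
  end.

Definition in_A (Om : set 'rV[R]_n) (f : 'rV[R]_n -> ivl) : Prop :=
  forall x, Om x -> ((f x).1 <= (f x).2)%E.

Definition dense_in (D Om : set 'rV[R]_n) : Prop :=
  D `<=` Om /\
  forall x, Om x -> forall d : R, 0 < d -> exists y, D y /\ `|x - y| < d.

Definition Bd (Om : set 'rV[R]_n) (x : 'rV[R]_n) (d : R) : set 'rV[R]_n :=
  [set y | Om y /\ `|x - y| < d].

Definition vals (D Om : set 'rV[R]_n) (f : 'rV[R]_n -> ivl) x d : set (\bar R) :=
  [set z | exists y, (Bd Om x d `&` D) y /\ mem_ivl z (f y)].

Definition Iop (D Om : set 'rV[R]_n) (f : 'rV[R]_n -> ivl) x : \bar R :=
  ereal_sup [set ereal_inf (vals D Om f x d) | d in [set d : R | 0 < d]].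

Definition Sop (D Om : set 'rV[R]_n) (f : 'rV[R]_n -> ivl) x : \bar R :=
  ereal_inf [set ereal_sup (vals D Om f x d) | d in [set d : R | 0 < d]].

Definition Fop (D Om : set 'rV[R]_n) (f : 'rV[R]_n -> ivl) x : ivl :=
  (Iop D Om f x, Sop D Om f x).

Definition D_continuous (Om : set 'rV[R]_n) (f : 'rV[R]_n -> ivl) : Prop :=
  forall D, dense_in D Om -> forall x, Om x -> Fop D Om f x = f x.

Definition H_continuous (Om : set 'rV[R]_n) (f : 'rV[R]_n -> ivl) : Prop :=
  forall g, in_A Om g ->
    (forall x, Om x -> forall z, mem_ivl z (g x) -> mem_ivl z (f x)) ->
    forall x, Om x -> Fop Om Om g x = f x.

End IntervalAnalysis.

(* Main.v *)
Require Import Defs.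
From HB Require Import structures.
From mathcomp Require Import all_boot all_order all_algebra.
From mathcomp Require Import all_classical all_reals all_analysis.
Import Order.TTheory GRing.Theory Num.Theory.
Import numFieldNormedType.Exports.
Local Open Scope classical_set_scope.
Local Open Scope ring_scope.

Lemma sup_img_mono (R : realType) (P : set R) (F G : R -> \bar R) :
  (forall d, P d -> (F d <= G d)%E) ->
  (ereal_sup [set F d | d in P] <= ereal_sup [set G d | d in P])%E.
Proof.
move=> H; apply: ge_ereal_sup => _ [d Pd <-].
apply: le_trans (H d Pd) _; apply: ereal_sup_ubound; by exists d.
Qed.

Lemma inf_img_mono (R : realType) (P : set R) (F G : R -> \bar R) :
  (forall d, P d -> (F d <= G d)%E) ->
  (ereal_inf [set F d | d in P] <= ereal_inf [set G d | d in P])%E.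
Proof.
move=> H; apply: le_ereal_inf_tmp => _ [d Pd <-].
apply: le_trans _ (H d Pd); apply: ereal_inf_lbound; by exists d.
Qed.

Lemma width0 (R : realType) (a : \bar R * \bar R) :
  width a = 0%E -> a.1 = a.2.
Proof.
case: a => [[l| |] [h| |]] //=; try by case.
by move=> [] /eqP; rewrite subr_eq0 => /eqP ->.
Qed.

Theorem theorem4 (R : realType) (n : nat) (Om : set 'rV[R]_n)
  (f : 'rV[R]_n -> \bar R * \bar R) :
  open Om -> in_A Om f -> D_continuous Om f ->
  (exists D : set 'rV[R]_n, dense_in D Om /\ forall x, D x -> width (f x) = 0%E) ->
  H_continuous Om f.
Proof.
move=> _ fA fD [D [dD wD]] g gA gf x Ox.
have dOm : dense_in Om Om.
  split=> // y Oy d d0; exists y; split => //; by rewrite subrr normr0.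
have E1 := fD _ dOm x Ox.
have E2 := fD _ dD x Ox.
have sub1 : forall d, vals Om Om g x d `<=` vals Om Om f x d.
  move=> d z [y [[By Oy] Hz]]; exists y; split => //; exact: gf.
have sub2 : forall d, vals D Om f x d `<=` vals Om Om g x d.
  move=> d z [y [[By Dy] [Hz1 Hz2]]]; exists y; split; first by split => //; case: By.
  have Oy : Om y by case: By.
  have e := @width0 _ _ (wD y Dy).
  have g1 : mem_ivl (g y).1 (f y) by apply: gf => //; split => //; exact: gA.
  have g2 : mem_ivl (g y).2 (f y) by apply: gf => //; split => //; exact: gA.
  case: g1 g2 => a1 a2 [b1 b2].
  have zz : z = (f y).1 by apply/le_anti; rewrite Hz1 andbT e Hz2.
  have h1 : (g y).1 = (f y).1 by apply/le_anti; rewrite a1 andbT e a2.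
  have h2 : (g y).2 = (f y).1 by apply/le_anti; rewrite b1 andbT e b2.
  rewrite /mem_ivl h1 h2 zz; split; exact: lexx.
rewrite /Fop in E1 E2 *.
case: (f x) E1 E2 => l h [I1 S1] [I2 S2].
congr pair; apply/le_anti/andP; split.
- rewrite -I2; apply: sup_img_mono => d _; apply: le_ereal_inf; exact: sub2.
- rewrite -I1; apply: sup_img_mono => d _; apply: le_ereal_inf; exact: sub1.
- rewrite -S1; apply: inf_img_mono => d _; apply: le_ereal_sup; exact: sub1.
- rewrite -S2; apply: inf_img_mono => d _; apply: le_ereal_sup; exact: sub2.
Qed.
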